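(* Let $1<\beta<\beta_*$, where $\beta_*\approx1.4656$ is the real root of $x^3-x^2-1=0$. Then $\mathbb P(D)=1$.
   Context: $\vec q_0=(0,0)$, $\vec q_1=(1,0)$, $\vec q_2=(0,1)$. Subsets of the plane (of the triangle with vertices $(0,0)$, $(\frac1{\beta-1},0)$, $(0,\frac1{\beta-1})$): $C_{01}=\{x\ge\frac1\beta,\ 0\le y<\frac1\beta,\ x+y\le\frac{1}{\beta(\beta-1)}\}$; $C_{12}=\{x\ge\frac1\beta,\ y\ge\frac1\beta,\ \frac{1}{\beta(\beta-1)}<x+y\le\frac{1}{\beta-1}\}$; $C_{02}=\{0\le x<\frac1\beta,\ y\ge\frac1\beta,\ x+y\le\frac{1}{\beta(\beta-1)}\}$; $C_{012}=\{x\ge\frac1\beta,\ y\ge\frac1\beta,\ x+y\le\frac{1}{\beta(\beta-1)}\}$; $C=C_{01}\cup C_{12}\cup C_{02}$. $\Upsilon=\{0,1,2\}^{\mathbb N}$ with its product $\sigma$-algebra and $\mathbb P$ the uniform product (Bernoulli $(1/3,1/3,1/3)$) measure. $D$ is the set of $(b_1,b_2,\ldots)\in\Upsilon$ such that $\sum_{i\ge1}\vec q_{b_{j+i-1}}\beta^{-i}\in C$ for infinitely many $j$ and $\sum_{i\ge1}\vec q_{b_{j+i-1}}\beta^{-i}\in C_{012}$ for infinitely many $j$. *)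

(* Defs.v *)
From HB Require Import structures.
From mathcomp Require Import all_boot all_order all_algebra.
From mathcomp Require Import all_classical all_reals all_analysis.
Set Implicit Arguments. Unset Strict Implicit. Unset Printing Implicit Defensive.
Import Order.TTheory GRing.Theory Num.Theory.
Local Open Scope classical_set_scope.
Local Open Scope ring_scope.

(* Upsilon = {0,1,2}^N.  A sequence (b_1,b_2,...) is represented by
   b : nat -> 'I_3 with b k = b_{k+1} (0-based indexing). *)
Definition seq3 := nat -> 'I_3.
HB.instance Definition _ := Choice.copy seq3 (nat -> 'I_3).
HB.instance Definition _ := isPointed.Build seq3 (fun _ => ord0).

Definition cyl (n : nat) (w : seq3) : set seq3 :=
  [set b | forall i, (i < n)%N -> b i = w i].

Definition cylinders : set (set seq3) :=
  [set A | exists n w, A = cyl n w].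

Definition Upsilon := g_sigma_algebraType cylinders.
HB.instance Definition _ := Measurable.copy Upsilon (g_sigma_algebraType cylinders).

(* The uniform Bernoulli (1/3,1/3,1/3) product measure is characterized by
   its values on cylinders. *)
Definition is_uniform_product (R : realType)
  (P : probability Upsilon R) : Prop :=
  forall n (w : seq3), P (cyl n w) = ((3%:R^-1 : R) ^+ n)%:E.

Section Geometry.
Variable R : realType.
Variable beta : R.

(* x- and y-coordinates of  sum_{i>=1} q_{b_{j+i-1}} beta^{-i},
   in 0-based indexing: sum_{i>=0} q_{b (j+i)} beta^{-(i+1)}, with
   q_0=(0,0), q_1=(1,0), q_2=(0,1). *)
Definition xcoord (b : seq3) (j : nat) : R :=
  limn (fun n => \sum_(0 <= i < n) (((nat_of_ord (b (j + i)%N) == 1%N)%:R) / beta ^+ i.+1)).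
Definition ycoord (b : seq3) (j : nat) : R :=
  limn (fun n => \sum_(0 <= i < n) (((nat_of_ord (b (j + i)%N) == 2%N)%:R) / beta ^+ i.+1)).

Definition C01 (x y : R) : Prop :=
  beta^-1 <= x /\ 0 <= y /\ y < beta^-1 /\ x + y <= (beta * (beta - 1))^-1.
Definition C12 (x y : R) : Prop :=
  beta^-1 <= x /\ beta^-1 <= y /\ (beta * (beta - 1))^-1 < x + y /\
  x + y <= (beta - 1)^-1.
Definition C02 (x y : R) : Prop :=
  0 <= x /\ x < beta^-1 /\ beta^-1 <= y /\ x + y <= (beta * (beta - 1))^-1.
Definition C012 (x y : R) : Prop :=
  beta^-1 <= x /\ beta^-1 <= y /\ x + y <= (beta * (beta - 1))^-1.
Definition Cset (x y : R) : Prop := C01 x y \/ C12 x y \/ C02 x y.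

Definition Dset : set Upsilon :=
  [set b | (forall N, exists j, (N <= j)%N /\ Cset (xcoord b j) (ycoord b j)) /\
           (forall N, exists j, (N <= j)%N /\ C012 (xcoord b j) (ycoord b j))].
End Geometry.

(* Main.v *)
Require Import Defs.
From HB Require Import structures.
From mathcomp Require Import all_boot all_order all_algebra.
From mathcomp Require Import all_classical all_reals all_analysis.
Import Order.TTheory GRing.Theory Num.Theory.
Local Open Scope classical_set_scope.
Local Open Scope ring_scope.
Set Implicit Arguments. Unset Strict Implicit.
From mathcomp Require Import measurable_realfun.
From Stdlib Require Classical_Prop.
Import numFieldNormedType.Exports.
From mathcomp Require Import zify ring lra.

Section Series.
Variables (R : realType) (beta : R).
Hypothesis H1 : 1 < beta.

Definition ps (a : nat -> R) n := \sum_(0 <= i < n) a i / beta ^+ i.+1.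

Lemma b0 : 0 < beta. Proof. exact: lt_trans H1. Qed.

Lemma ps_nd a : (forall i, 0 <= a i) -> nondecreasing_seq (ps a).
Proof.
move=> a0 m n mn; rewrite /ps (big_cat_nat (leq0n m) mn) /= lerDl.
apply: sumr_ge0 => i _; apply: divr_ge0 => //; apply: exprn_ge0; exact: ltW b0.
Qed.

Lemma ps_tail a1 a2 : (forall i, 0 <= a1 i) -> (forall i, 0 <= a2 i) ->
  (forall i, a1 i + a2 i <= 1) -> forall k d,
  ps a1 (k + d) + ps a2 (k + d) <=
  ps a1 k + ps a2 k + ((beta ^+ k)^-1 - (beta ^+ (k + d))^-1) / (beta - 1).
Proof.
move=> h1 h2 h12 k; elim=> [|d IH]; first by rewrite addn0 subrr mul0r addr0.
rewrite addnS /ps !big_nat_recr //= -/(ps a1 (k + d)) -/(ps a2 (k + d)).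
have bp : 0 < beta ^+ (k + d) by rewrite exprn_gt0 // b0.
have bb := b0.
set B := beta ^+ (k + d) in bp *.
have -> : beta ^+ (k + d).+1 = beta * B by rewrite exprS.
have e : a1 (k + d) / (beta * B) + a2 (k + d) / (beta * B) <= (beta * B)^-1.
  rewrite -mulrDl ler_pdivrMr ?mulr_gt0 // mulVf ?mulf_neq0 ?gt_eqF //.
set T := _ / (beta * B) + _ / (beta * B) in e.
have -> : ps a1 (k + d) + a1 (k + d) / (beta * B) + (ps a2 (k + d) + a2 (k + d) / (beta * B))
   = ps a1 (k + d) + ps a2 (k + d) + T by rewrite /T; ring.
apply: le_trans (lerD IH e) _.
rewrite le_eqVlt; apply/orP; left; apply/eqP.
have b1 : beta - 1 != 0 by rewrite subr_eq0 gt_eqF.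
rewrite -/(ps a1 k) -/(ps a2 k) -/B.
set X := beta ^- k; set Y := ps a1 k + ps a2 k.
field. all: rewrite ?mulf_neq0 ?gt_eqF ?subr_gt0 //.
Qed.

Lemma ps0 a : ps a 0 = 0. Proof. by rewrite /ps big_geq. Qed.

Lemma ps_ge0 a : (forall i, 0 <= a i) -> forall n, 0 <= ps a n.
Proof. by move=> h n; rewrite -(ps0 a); apply: ps_nd. Qed.

Lemma ps_cvg a1 a2 : (forall i, 0 <= a1 i) -> (forall i, 0 <= a2 i) ->
  (forall i, a1 i + a2 i <= 1) -> cvgn (ps a1).
Proof.
move=> h1 h2 h12; apply: nondecreasing_is_cvgn; first exact: ps_nd.
exists ((beta - 1)^-1) => _ [n _ <-].
have := ps_tail h1 h2 h12 0 n; rewrite !ps0 add0n expr0 invr1 !add0r.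
move=> h; apply: le_trans (_ : ps a1 n + ps a2 n <= _).
  by rewrite lerDl ps_ge0.
apply: (le_trans h); apply: ler_piMl; first by rewrite invr_ge0 subr_ge0 ltW.
by rewrite gerBl invr_ge0 exprn_ge0 // ltW // b0.
Qed.

Lemma ps_bounds a1 a2 : (forall i, 0 <= a1 i) -> (forall i, 0 <= a2 i) ->
  (forall i, a1 i + a2 i <= 1) -> forall k,
  [/\ ps a1 k <= limn (ps a1), ps a2 k <= limn (ps a2), 0 <= limn (ps a2) &
      limn (ps a1) + limn (ps a2) <= ps a1 k + ps a2 k + (beta ^+ k)^-1 / (beta - 1)].
Proof.
move=> h1 h2 h12 k.
have h21 i : a2 i + a1 i <= 1 by rewrite addrC.
have c1 := ps_cvg h1 h2 h12; have c2 := ps_cvg h2 h1 h21.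
split.
- exact: nondecreasing_cvgn_le (ps_nd h1) c1 k.
- exact: nondecreasing_cvgn_le (ps_nd h2) c2 k.
- by apply: le_trans (nondecreasing_cvgn_le (ps_nd h2) c2 0); rewrite ps0.
rewrite -limD //; apply: limr_le; first exact: is_cvgD.
near=> n.
have kn : (k <= n)%N by near: n; exists k.
have := ps_tail h1 h2 h12 k (n - k); rewrite subnKC // => h.
apply: (le_trans h); rewrite lerD2l ler_pM2r ?invr_gt0 ?subr_gt0 // gerBl invr_ge0.
by rewrite exprn_ge0 // ltW // b0.
Unshelve. all: by end_near.
Qed.

End Series.

Definition o0 : 'I_3 := Ordinal (isT : (0 < 3)%N).
Definition o1 : 'I_3 := Ordinal (isT : (1 < 3)%N).
Definition o2 : 'I_3 := Ordinal (isT : (2 < 3)%N).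
Definition w1 (i : nat) : 'I_3 := if i == 0%N then o1 else o0.
Definition w2 (i : nat) : 'I_3 :=
  if i == 0%N then o1 else if (i == 1%N) || (i == 3%N) then o2 else o0.

Section Geo.
Variables (R : realType) (beta : R).
Hypothesis H1 : 1 < beta.

Lemma xcoordE b j : xcoord beta b j = limn (ps beta (fun i => ((nat_of_ord (b (j + i)%N) == 1%N)%:R : R))).
Proof. by []. Qed.

Lemma ps_w1_1 k : (1 <= k)%N -> ps beta (fun i => ((nat_of_ord (w1 i) == 1%N)%:R : R)) k = beta^-1.
Proof.
move=> k1; rewrite /ps (big_cat_nat (leq0n 1) k1) /= big_nat1 /= big1_seq ?addr0 ?expr1 ?mul1r //.
move=> i /andP [_]; rewrite mem_index_iota => /andP [i1 _]; have i0 : (i == 0%N) = false.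
  by apply/negbTE/eqP; lia.
by rewrite /w1 i0 /= mul0r.
Qed.

Lemma ps_w2_2 k : (5 <= k)%N -> ps beta (fun i => ((nat_of_ord (w2 i) == 2%N)%:R : R)) k = beta^-2 + beta^-4.
Proof.
move=> k1; rewrite /ps (big_cat_nat (leq0n 5) k1) /= [X in _ + X]big1_seq ?addr0; last first.
  move=> i /andP [_]; rewrite mem_index_iota => /andP [i1 _]; rewrite /w2.
  have -> : (i == 0%N) = false by apply/negbTE/eqP; lia.
  have -> : (i == 1%N) || (i == 3%N) = false by apply/negbTE/negP => /orP [] /eqP; lia.
  by rewrite /= mul0r.
rewrite !big_nat_recl // big_geq //= !mul0r !mul1r !add0r addr0.
by [].
Qed.

Lemma ps_w1_2 k : ps beta (fun i => ((nat_of_ord (w1 i) == 2%N)%:R : R)) k = 0.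
Proof. by rewrite /ps big1 // => i _; rewrite /w1; case: ifP => _; rewrite /= mul0r. Qed.

Lemma ps_w2_1 k : (1 <= k)%N -> ps beta (fun i => ((nat_of_ord (w2 i) == 1%N)%:R : R)) k = beta^-1.
Proof.
move=> k1; rewrite /ps (big_cat_nat (leq0n 1) k1) /= big_nat1 /= [X in _ + X]big1_seq ?addr0 ?expr1 ?mul1r //.
move=> i /andP [_]; rewrite mem_index_iota => /andP [i1 _].
have i0 : (i == 0%N) = false by apply/negbTE/eqP; lia.
by rewrite /w2 i0; case: ifP => _; rewrite /= mul0r.
Qed.

Definition occ (w : nat -> 'I_3) L (b : seq3) j :=
  forall i, (i < L)%N -> b (j + i)%N = w i.

Lemma occ_ps w k b j c : occ w k b j ->
  ps beta (fun i => ((nat_of_ord (b (j + i)%N) == c)%:R : R)) k =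
  ps beta (fun i => ((nat_of_ord (w i) == c)%:R : R)) k.
Proof. by move=> h; apply: eq_big_nat => i /andP [_ ik]; rewrite h. Qed.

Lemma coord_bounds b j k :
  let a1 := ps beta (fun i => ((nat_of_ord (b (j + i)%N) == 1%N)%:R : R)) in
  let a2 := ps beta (fun i => ((nat_of_ord (b (j + i)%N) == 2%N)%:R : R)) in
  [/\ a1 k <= xcoord beta b j, a2 k <= ycoord beta b j, 0 <= ycoord beta b j &
      xcoord beta b j + ycoord beta b j <= a1 k + a2 k + (beta ^+ k)^-1 / (beta - 1)].
Proof.
move=> a1 a2; apply: ps_bounds => // i.
by case: (b (j + i)%N) => [[|[|[|]]] ?] //=; rewrite ?addr0 ?add0r ?ler01 ?lexx.
Qed.

Lemma C01_of X Y E : beta^-1 <= X -> 0 <= Y -> X + Y <= beta^-1 + 0 + E ->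
  E < beta^-1 -> beta^-1 + E <= (beta * (beta - 1))^-1 -> C01 beta X Y.
Proof. move=> h1 h2 h3 h4 h5; rewrite /C01; split; [|split; [|split]]; lra. Qed.

Lemma C012_of X Y E : beta^-1 <= X -> beta^-2 + beta^-4 <= Y ->
  X + Y <= beta^-1 + (beta^-2 + beta^-4) + E ->
  beta^-1 + (beta^-2 + beta^-4) + E <= (beta * (beta - 1))^-1 ->
  beta^-1 <= beta^-2 + beta^-4 -> C012 beta X Y.
Proof. move=> h1 h2 h3 h4 h5; rewrite /C012; split; [|split]; lra. Qed.

Lemma geo1 b j k : (5 <= k)%N -> occ w1 k b j ->
  (beta ^+ k)^-1 / (beta - 1) < beta^-1 ->
  beta^-1 + (beta^-2 + beta^-4) + (beta ^+ k)^-1 / (beta - 1) <= (beta * (beta - 1))^-1 ->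
  beta^-2 + beta^-4 >= 0 ->
  Cset beta (xcoord beta b j) (ycoord beta b j).
Proof.
move=> k5 oc hE hS h0; left.
have [] := coord_bounds b j k; rewrite !(occ_ps _ oc) ps_w1_2 ps_w1_1 ?(leq_trans _ k5) //.
move=> hx _ hy hs; apply: C01_of hx hy hs hE _; lra.
Qed.

Lemma geo2 b j k : (5 <= k)%N -> occ w2 k b j ->
  beta^-1 + (beta^-2 + beta^-4) + (beta ^+ k)^-1 / (beta - 1) <= (beta * (beta - 1))^-1 ->
  beta^-1 <= beta^-2 + beta^-4 ->
  C012 beta (xcoord beta b j) (ycoord beta b j).
Proof.
move=> k5 oc hS h0.
have [] := coord_bounds b j k; rewrite !(occ_ps _ oc) ps_w2_2 ?ps_w2_1 ?(leq_trans _ k5) //.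
move=> hx hy _ hs; exact: C012_of hx hy hs hS h0.
Qed.

End Geo.

Section Num.
Variables (R : realType) (beta beta_star : R).
Hypotheses (Hstar : beta_star ^+ 3 - beta_star ^+ 2 - 1 = 0)
  (H1 : 1 < beta) (H2 : beta < beta_star).

Lemma cubic : beta ^+ 3 < beta ^+ 2 + 1.
Proof.
have h1 := H1; have h2 := H2; have hs := Hstar.
have e : beta_star ^+ 3 - beta_star ^+ 2 - 1 - (beta ^+ 3 - beta ^+ 2 - 1) =
  (beta_star - beta) * (beta_star * (beta_star - 1) + beta * (beta_star - 1) + beta * (beta - 1) + beta) by ring.
have p : 0 < (beta_star - beta) * (beta_star * (beta_star - 1) + beta * (beta_star - 1) + beta * (beta - 1) + beta).
  apply: mulr_gt0; first by rewrite subr_gt0.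
  have bs : 1 < beta_star := lt_trans H1 H2.
  have b0 : 0 < beta := lt_trans ltr01 H1.
  have t1 : 0 < beta_star * (beta_star - 1) by apply: mulr_gt0; lra.
  have t2 : 0 < beta * (beta_star - 1) by apply: mulr_gt0; lra.
  have t3 : 0 < beta * (beta - 1) by apply: mulr_gt0; lra.
  lra.
rewrite -e Hstar in p; lra.
Qed.

Lemma bpos : 0 < beta. Proof. exact: lt_trans ltr01 H1. Qed.

Lemma h0 : beta^-1 <= beta^-2 + beta^-4.
Proof.
have h1 := H1; have h2 := H2; have hs := Hstar.
have b0 := bpos.
have e : beta^-2 + beta^-4 - beta^-1 = (beta ^+ 2 + 1 - beta ^+ 3) / beta ^+ 4.
  by field; rewrite gt_eqF.
rewrite -subr_ge0 e divr_ge0 ?exprn_ge0 ?ltW //; have := cubic; lra.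
Qed.

Definition delta := (beta * (beta - 1))^-1 - (beta^-1 + (beta^-2 + beta^-4)).

Lemma delta_gt0 : 0 < delta.
Proof.
have h1 := H1; have h2 := H2; have hs := Hstar.
have b0 := bpos.
have b1 : beta - 1 != 0 by rewrite subr_eq0 gt_eqF.
have e : delta = (- beta ^+ 4 + beta ^+ 3 + beta ^+ 2 - beta + 1) / (beta ^+ 4 * (beta - 1)).
  by rewrite /delta; field; rewrite b1 gt_eqF.
rewrite e divr_gt0 //; last by rewrite mulr_gt0 ?exprn_gt0 ?subr_gt0.
have c := cubic.
have c4 : beta ^+ 4 < beta ^+ 3 + beta.
  have -> : beta ^+ 4 = beta * beta ^+ 3 by rewrite exprS.
  have -> : beta ^+ 3 + beta = beta * (beta ^+ 2 + 1) by rewrite exprS; ring.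
  by rewrite ltr_pM2l.
have : 0 < (beta - 1) ^+ 2 by rewrite exprn_gt0 // subr_gt0.
have -> : (beta - 1) ^+ 2 = beta ^+ 2 - 2 * beta + 1 by ring.
lra.
Qed.

Lemma exists_k : exists k, [/\ (5 <= k)%N,
  (beta ^+ k)^-1 / (beta - 1) < beta^-1 &
  beta^-1 + (beta^-2 + beta^-4) + (beta ^+ k)^-1 / (beta - 1) <= (beta * (beta - 1))^-1].
Proof.
have h1 := H1; have h2 := H2; have hs := Hstar.
have b0 := bpos.
have bm : 0 < beta - 1 by rewrite subr_gt0.
have r1 : `|beta^-1| < 1 by rewrite gtr0_norm ?invr_gt0 // invf_lt1.
have c := cvg_expr r1.
have p1 : 0 < (beta - 1) * beta^-1 by rewrite mulr_gt0 ?invr_gt0.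
have p2 : 0 < (beta - 1) * delta by rewrite mulr_gt0 ?delta_gt0.
have e1 := cvgr_lt _ c _ p1.
have e2 := cvgr_lt _ c _ p2.
have : \forall n \near \oo, [/\ (5 <= n)%N, beta^-1 ^+ n < (beta - 1) * beta^-1 &
   beta^-1 ^+ n < (beta - 1) * delta].
  near=> n; split.
  - by near: n; exists 5%N.
  - by near: n; apply: e1.
  - by near: n; apply: e2.
case=> N _ /(_ N (leqnn N)) [k5 ha hb]; exists N; split => //.
  by rewrite ltr_pdivrMr // mulrC -exprVn.
have : (beta ^+ N)^-1 / (beta - 1) <= delta.
  by rewrite ler_pdivrMr // mulrC -exprVn ltW.
rewrite /delta; lra.
Unshelve. all: by end_near.
Qed.

End Num.


Definition ext p (t : {ffun 'I_p -> 'I_3}) : seq3 :=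
  fun i => odflt ord0 (omap t (insub i)).

Lemma extE p t i (H : (i < p)%N) : ext t i = t (Ordinal H).
Proof. by rewrite /ext insubT /=. Qed.

Definition pref p (b : seq3) : {ffun 'I_p -> 'I_3} := [ffun i => b (val i)].

Definition det p (S : set seq3) :=
  forall b b', (forall i, (i < p)%N -> b i = b' i) -> S b -> S b'.

Lemma cyl_meas n w : measurable (cyl n w : set Upsilon).
Proof. by apply: sub_sigma_algebra; exists n, w. Qed.

Lemma det_decomp p S : det p S ->
  S = \bigcup_(t in [set t : {ffun 'I_p -> 'I_3} | S (ext t)]) cyl p (ext t).
Proof.
move=> dS; apply/seteqP; split => b.
  move=> Sb; exists (pref p b).
    apply: (dS b) => // i ip; by rewrite extE ffunE.
  by move=> i ip; rewrite extE ffunE.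
case=> t /= St cb; apply: (dS (ext t)) => // i ip; by rewrite cb.
Qed.

Lemma det_triv p : trivIset [set t | True] (fun t : {ffun 'I_p -> 'I_3} => cyl p (ext t)).
Proof.
move=> t t' _ _ [b [/= h1 h2]]; apply/ffunP => i.
have E : Ordinal (ltn_ord i) = i by apply: val_inj.
by rewrite -E -(extE t (ltn_ord i)) -(extE t' (ltn_ord i)) -(h1 _ (ltn_ord i)) h2.
Qed.

Lemma det_meas p S : det p S -> measurable (S : set Upsilon).
Proof.
move=> dS; rewrite (det_decomp dS); apply: fin_bigcup_measurable => // t _.
exact: cyl_meas.
Qed.

Lemma det_trivI p (D : set {ffun 'I_p -> 'I_3}) (B : set seq3) :
  trivIset D (fun t => cyl p (ext t) `&` B).
Proof.
move=> t t' _ _ [b [/= [h1 _] [h2 _]]]; apply/ffunP => i.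
have E : Ordinal (ltn_ord i) = i by apply: val_inj.
by rewrite -E -(extE t (ltn_ord i)) -(extE t' (ltn_ord i)) -(h1 _ (ltn_ord i)) h2.
Qed.

Definition W p L (u : nat -> 'I_3) : set seq3 :=
  [set b | forall i, (i < L)%N -> b (p + i)%N = u i].

Definition glue p (t : {ffun 'I_p -> 'I_3}) (u : nat -> 'I_3) : seq3 :=
  fun i => if (i < p)%N then ext t i else u (i - p)%N.

Lemma cylW p (t : {ffun 'I_p -> 'I_3}) L u : cyl p (ext t) `&` W p L u = cyl (p + L) (glue t u).
Proof.
apply/seteqP; split => b /=.
  move=> [h1 h2] i iL; rewrite /glue; case: ifP => ip; first exact: h1.
  have -> : i = (p + (i - p))%N by rewrite subnKC // leqNgt ip.
  by rewrite h2 ?addKn // -(ltn_add2l p) subnKC // leqNgt ip.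
move=> h; split => i ip.
  by rewrite h ?/glue ?ip // (leq_trans ip) // leq_addr.
by rewrite h ?/glue ?ltn_add2l // ltnNge leq_addr /= addKn.
Qed.

Section Meas.
Variables (R : realType) (P : probability Upsilon R) (HP : is_uniform_product P).

Lemma det_measure p S (dS : det p S) (B : set Upsilon) : measurable B ->
  P (S `&` B) = (\sum_(t \in [set t : {ffun 'I_p -> 'I_3} | S (ext t)])
                     P (cyl p (ext t) `&` B))%E.
Proof.
move=> mB; rewrite {1}(det_decomp dS) setI_bigcupl measure_fin_bigcup //.
  exact: (@finite_finset {ffun 'I_p -> 'I_3}).
  exact: (@det_trivI p _ B).
by move=> t _; apply: measurableI => //; exact: cyl_meas.
Qed.

Lemma indep p S (dS : det p S) L u :
  P (S `&` W p L u) = (P S * ((3%:R^-1 : R) ^+ L)%:E)%E.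
Proof.
have mW : measurable (W p L u : set Upsilon).
  apply: (@det_meas (p + L)) => b b' h Wb i iL.
  by rewrite -h ?Wb // ltn_add2l.
rewrite (det_measure dS) //.
rewrite -[S in P S]setIT (det_measure dS) //.
under eq_fsbigr do rewrite cylW HP.
under [X in (_ = X * _)%E]eq_fsbigr do rewrite setIT HP.
rewrite !fsbig_finite //= !sumEFin -EFinM big_distrl /=.
by congr (_ %:E); apply: eq_bigr => t _; rewrite exprD.
Qed.

End Meas.




Definition Aset (w : nat -> 'I_3) L N M : set seq3 :=
  [set b | forall m, (m < M)%N -> ~ occ w L b (N + m * L)%N].

Lemma A_det w L N M : det (N + M * L) (Aset w L N M).
Proof.
move=> b b' h Ab m mM oc; apply: (Ab m mM) => i iL.
rewrite h ?oc //.
have : (m.+1 * L <= M * L)%N by rewrite leq_mul2r mM orbT.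
rewrite mulSn; lia.
Qed.

Lemma A_S w L N M : Aset w L N M.+1 = Aset w L N M `\` W (N + M * L) L w.
Proof.
apply/seteqP; split => b /=.
  move=> h; split; first by move=> m mM; apply: h; rewrite ltnS ltnW.
  by apply: (h M); rewrite ltnS.
move=> [h1 h2] m; rewrite ltnS leq_eqVlt => /orP [/eqP -> //|]; exact: h1.
Qed.

Section Meas2.
Variables (R : realType) (P : probability Upsilon R) (HP : is_uniform_product P).

Lemma PD (A B : set Upsilon) : measurable A -> measurable B ->
  P (A `\` B) = (P A - P (A `&` B))%E.
Proof.
move=> mA mB; apply: measureD => //.
by apply: (le_lt_trans (probability_le1 P mA)); rewrite ltey.
Qed.

Lemma P_A w L N M :
  P (Aset w L N M) = (((1 - (3%:R^-1 : R) ^+ L)) ^+ M)%:E.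
Proof.
elim: M => [|M IH].
  rewrite expr0 -(probability_setT P); congr (P _).
  by apply/seteqP; split => b // _ m.
have mA : measurable (Aset w L N M : set Upsilon) := det_meas (@A_det w L N M).
have mW : measurable (W (N + M * L) L w : set Upsilon).
  apply: (@det_meas (N + M * L + L)) => b b' h Wb i iL.
  by rewrite -h ?Wb // ltn_add2l.
rewrite A_S PD //.
have E := indep HP (@A_det w L N M) L w.
rewrite E IH -EFinM -EFinB; congr (_ %:E).
by rewrite exprS; ring.
Qed.

End Meas2.

Section Meas3.
Variables (R : realType) (P : probability Upsilon R) (HP : is_uniform_product P).

Definition Zset w L N : set seq3 := \bigcap_M Aset w L N M.

Lemma Z_meas w L N : measurable (Zset w L N : set Upsilon).
Proof. apply: bigcapT_measurable => M; exact: det_meas (@A_det w L N M). Qed.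

Lemma Z_null w L N : (0 < L)%N -> P (Zset w L N) = 0%E.
Proof.
move=> L0.
set q : R := 1 - (3%:R^-1 : R) ^+ L.
have c0 : 0 < (3%:R^-1 : R) ^+ L by rewrite exprn_gt0 // invr_gt0.
have c1 : (3%:R^-1 : R) ^+ L <= 1 by rewrite exprn_ile1 // ?invr_ge0 ?invf_le1 ?ler1n.
have q0 : 0 <= q by rewrite /q subr_ge0.
have q1 : `|q| < 1 by rewrite ger0_norm // /q ltrBlDr ltrDl.
have fin : P (Zset w L N) \is a fin_num by rewrite fin_num_measure //; exact: Z_meas.
rewrite -(fineK fin); congr (_ %:E).
set z := fine _.
have z0 : 0 <= z by rewrite /z fine_ge0 // measure_ge0.
have zM M : z <= q ^+ M.
  rewrite -lee_fin /z fineK // -(P_A HP w L N M).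
  apply: le_measure; rewrite ?inE; [exact: Z_meas|exact: det_meas (@A_det w L N M)|].
  by move=> b Zb; apply: Zb.
apply/eqP; rewrite eq_le z0 andbT.
have lim0 : limn (fun M => q ^+ M) = 0.
  apply: cvg_lim => //.
  exact: (cvg_expr q1).
rewrite -lim0.
apply: limr_ge; first by apply/cvg_ex; exists 0; exact: (cvg_expr q1).
by near=> M; apply: zM.
Unshelve. all: by end_near.
Qed.

End Meas3.


Section Final.
Variables (R : realType) (beta : R).
Hypothesis H1 : 1 < beta.

Lemma ind_ge0 (b : seq3) j c i : 0 <= ((nat_of_ord (b (j + i)%N) == c)%:R : R).
Proof. exact: ler0n. Qed.

Lemma ind_sum (b : seq3) j i :
  ((nat_of_ord (b (j + i)%N) == 1%N)%:R : R) + ((nat_of_ord (b (j + i)%N) == 2%N)%:R) <= 1.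
Proof. by case: (b (j + i)%N) => [[|[|[|]]] ?] //=; rewrite ?addr0 ?add0r ?ler01 ?lexx. Qed.

Lemma det_fun p (f : seq3 -> R) :
  (forall b b', (forall i, (i < p)%N -> b i = b' i) -> f b = f b') ->
  measurable_fun setT (f : Upsilon -> R).
Proof.
move=> h _ Y _; rewrite setTI; apply: (@det_meas p) => b b' hb /=.
by rewrite (h b b' hb).
Qed.

Lemma ps_det j c n : forall b b' : seq3, (forall i, (i < j + n)%N -> b i = b' i) ->
  ps beta (fun i => ((nat_of_ord (b (j + i)%N) == c)%:R : R)) n =
  ps beta (fun i => ((nat_of_ord (b' (j + i)%N) == c)%:R : R)) n.
Proof.
move=> b b' h; apply: eq_big_nat => i /andP [_ ilt]; rewrite h //; lia.
Qed.

Lemma xmeas j : measurable_fun setT (fun b : Upsilon => xcoord beta b j).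
Proof.
apply: (@measurable_fun_cvg _ _ _ _
  (fun n (b : Upsilon) => ps beta (fun i => ((nat_of_ord (b (j + i)%N) == 1%N)%:R : R)) n)).
  move=> n; apply: (@det_fun (j + n)) => b b' h; exact: ps_det.
move=> b _; apply: (@ps_cvg _ _ H1 _ (fun i => ((nat_of_ord (b (j + i)%N) == 2%N)%:R : R))).
- by move=> i; apply: ind_ge0.
- by move=> i; apply: ind_ge0.
- by move=> i; apply: ind_sum.
Qed.

Lemma ymeas j : measurable_fun setT (fun b : Upsilon => ycoord beta b j).
Proof.
apply: (@measurable_fun_cvg _ _ _ _
  (fun n (b : Upsilon) => ps beta (fun i => ((nat_of_ord (b (j + i)%N) == 2%N)%:R : R)) n)).
  move=> n; apply: (@det_fun (j + n)) => b b' h; exact: ps_det.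
move=> b _; apply: (@ps_cvg _ _ H1 _ (fun i => ((nat_of_ord (b (j + i)%N) == 1%N)%:R : R))).
- by move=> i; apply: ind_ge0.
- by move=> i; apply: ind_ge0.
- by move=> i; rewrite addrC; apply: ind_sum.
Qed.

Lemma mge (f : Upsilon -> R) a : measurable_fun setT f -> measurable [set b | a <= f b].
Proof.
move=> mf; have := mf measurableT _ (measurable_itv `[a, +oo[); rewrite setTI.
congr measurable; apply/seteqP; split => b /=; rewrite in_itv /= andbT //.
Qed.

Lemma mle (f : Upsilon -> R) a : measurable_fun setT f -> measurable [set b | f b <= a].
Proof.
move=> mf; have := mf measurableT _ (measurable_itv `]-oo, a]); rewrite setTI.
congr measurable; apply/seteqP; split => b /=; rewrite in_itv /= //.
Qed.

Lemma mlt (f : Upsilon -> R) a : measurable_fun setT f -> measurable [set b | f b < a].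
Proof.
move=> mf; have := mf measurableT _ (measurable_itv `]-oo, a[); rewrite setTI.
congr measurable; apply/seteqP; split => b /=; rewrite in_itv /= //.
Qed.

Lemma mgt (f : Upsilon -> R) a : measurable_fun setT f -> measurable [set b | a < f b].
Proof.
move=> mf; have := mf measurableT _ (measurable_itv `]a, +oo[); rewrite setTI.
congr measurable; apply/seteqP; split => b /=; rewrite in_itv /= andbT //.
Qed.

End Final.

Section Final2.
Variables (R : realType) (beta : R).
Hypothesis H1 : 1 < beta.

Lemma Cset_meas j : measurable [set b : Upsilon | Cset beta (xcoord beta b j) (ycoord beta b j)].
Proof.
have mx := xmeas H1 j; have my := ymeas H1 j.
have ms := measurable_funD mx my.
apply: measurableU; [|apply: measurableU].
- apply: measurableI; first exact: mge.
  apply: measurableI; first exact: mge.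
  apply: measurableI; first exact: mlt.
  exact: (mle _ ms).
- apply: measurableI; first exact: mge.
  apply: measurableI; first exact: mge.
  apply: measurableI; first exact: (mgt _ ms).
  exact: (mle _ ms).
- apply: measurableI; first exact: mge.
  apply: measurableI; first exact: mlt.
  apply: measurableI; first exact: mge.
  exact: (mle _ ms).
Qed.

Lemma C012_meas j : measurable [set b : Upsilon | C012 beta (xcoord beta b j) (ycoord beta b j)].
Proof.
have mx := xmeas H1 j; have my := ymeas H1 j.
have ms := measurable_funD mx my.
apply: measurableI; first exact: mge.
apply: measurableI; first exact: mge.
exact: (mle _ ms).
Qed.

Lemma io_meas (E : nat -> set Upsilon) : (forall j, measurable (E j)) ->
  measurable [set b | forall N, exists j, (N <= j)%N /\ E j b].
Proof.
move=> mE.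
have -> : [set b | forall N, exists j, (N <= j)%N /\ E j b] =
   \bigcap_N \bigcup_(j in [set j | (N <= j)%N]) E j.
  apply/seteqP; split => b /=.
    by move=> h N _; have [j [Nj Ej]] := h N; exists j.
  by move=> h N; have [j Nj Ej] := h N I; exists j.
apply: bigcapT_measurable => N; apply: bigcup_measurable => j _; exact: mE.
Qed.

Lemma Dset_meas : measurable (Dset beta : set Upsilon).
Proof.
apply: measurableI.
  exact: (io_meas (fun j => Cset_meas j)).
exact: (io_meas (fun j => C012_meas j)).
Qed.

End Final2.

Theorem lemma4p5 (R : realType) (beta beta_star : R)
  (Hstar : beta_star ^+ 3 - beta_star ^+ 2 - 1 = 0)
  (H1 : 1 < beta) (H2 : beta < beta_star)
  (P : probability Upsilon R) (HP : is_uniform_product P) :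
  measurable (Dset beta) /\ P (Dset beta) = 1%E.
Proof.
have mD := Dset_meas H1.
split => //.
have [k [k5 hE hS]] := exists_k Hstar H1 H2.
have hh0 := h0 Hstar H1 H2.
have k0 : (0 < k)%N by apply: leq_trans k5.
set U := \bigcup_N (Zset w1 k N `|` Zset w2 k N).
have sub : ~` (Dset beta : set Upsilon) `<=` U.
  move=> b nD; apply: Classical_Prop.NNPP => nU; apply: nD; split => N.
    apply: Classical_Prop.NNPP => hn; apply: nU; exists N => //; left.
    move=> M _ m mM oc; apply: hn; exists (N + m * k)%N; split; first exact: leq_addr.
    apply: (geo1 H1 k5 oc hE hS); have := hh0; have : 0 < beta^-1 by rewrite invr_gt0 (lt_trans ltr01 H1).
    lra.
  apply: Classical_Prop.NNPP => hn; apply: nU; exists N => //; right.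
  move=> M _ m mM oc; apply: hn; exists (N + m * k)%N; split; first exact: leq_addr.
  exact: (geo2 H1 k5 oc hS hh0).
have negU : P.-negligible (U : set Upsilon).
  apply: negligible_bigcup => N; apply: negligibleU.
    by exists (Zset w1 k N); split => //; [exact: Z_meas | exact: Z_null].
  by exists (Zset w2 k N); split => //; [exact: Z_meas | exact: Z_null].
have [B [mB PB0 UB]] := negU.
have nD0 : P (~` Dset beta) = 0%E.
  apply/eqP; rewrite eq_le measure_ge0 andbT -PB0.
  apply: le_measure; rewrite ?inE //; [exact: measurableC | exact: subset_trans UB].
have := probability_setC P mD; rewrite nD0.
have fin : P (Dset beta) \is a fin_num by rewrite fin_num_measure.
rewrite -(fineK fin) => /eqP; rewrite eq_sym -EFinB eqe subr_eq0 => /eqP <-.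
by [].
Qed.
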